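(* Let $(L,[\cdot,\cdot],\{\cdot,\cdot,\cdot\},\alpha)$ be a Hom-Lie-Yamaguti algebra over a field $\mathbb{K}$, and let $(f_t,g_t)$ and $(f_t',g_t')$, with $f_t=\sum_{i\ge0}f_it^i$, $g_t=\sum_{i\ge0}g_it^i$, $f_t'=\sum_{i\ge0}f_i't^i$, $g_t'=\sum_{i\ge0}g_i't^i$, be equivalent one-parameter formal deformations of it. Then $(f_1,g_1)$ and $(f_1',g_1')$ belong to the same cohomology class in $HomH^2(L,L)\times HomH^3(L,L)$; that is, $(f_1-f_1',g_1-g_1')\in HomB^2(L,L)\times HomB^3(L,L)$.
   Context: A Hom-Lie-Yamaguti algebra (HLYA) over a commutative ring $R$ (here $R=\mathbb{K}$ a field or $R=\mathbb{K}[[t]]$) is a quadruple $(L,[\cdot,\cdot],\{\cdot,\cdot,\cdot\},\alpha)$ where $L$ is an $R$-module, $[\cdot,\cdot]$ is an $R$-bilinear and $\{\cdot,\cdot,\cdot\}$ an $R$-trilinear operation on $L$ (written $[xy]$, $\{xyz\}$), and $\alpha:L\to L$ is $R$-linear, such that for all $x,y,z,u,v\in L$: $\alpha([xy])=[\alpha(x)\alpha(y)]$; $\alpha(\{xyz\})=\{\alpha(x)\alpha(y)\alpha(z)\}$; $[xx]=0$; $\{xxy\}=0$; $\circlearrowleft_{x,y,z}([[xy]\alpha(z)]+\{xyz\})=0$; $\circlearrowleft_{x,y,z}\{[xy]\alpha(z)\alpha(u)\}=0$; $\{\alpha(x)\alpha(y)[uv]\}=[\{xyu\}\alpha^2(v)]+[\alpha^2(u)\{xyv\}]$;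 $\{\alpha^2(u)\alpha^2(v)\{xyz\}\}=\{\{uvx\}\alpha^2(y)\alpha^2(z)\}+\{\alpha^2(x)\{uvy\}\alpha^2(z)\}+\{\alpha^2(x)\alpha^2(y)\{uvz\}\}$, where $\circlearrowleft_{x,y,z}$ denotes the sum over cyclic permutations of $x,y,z$. Cochains: for $n\ge1$, $HomC^n(L,L)$ is the set of $\mathbb{K}$-multilinear maps $f:L^n\to L$ with $f(x_1,\dots,x_n)=0$ whenever $x_{2i-1}=x_{2i}$ for some $i$, and $f(\alpha(x_1),\dots,\alpha(x_n))=\alpha(f(x_1,\dots,x_n))$. For $h\in HomC^1(L,L)$ put $\delta_I^1h(x,y)=[xh(y)]+[h(x)y]-h([xy])$ and $\delta_{II}^1h(x,y,z)=\{h(x)yz\}+\{xh(y)z\}+\{xyh(z)\}-h(\{xyz\})$. For $(f,g)\in HomC^2(L,L)\times HomC^3(L,L)$ put $\delta_I^2(f,g)(x,y,z,u)=\{\alpha(x)\alpha(y)f(z,u)\}-f(\{xyz\},\alpha^2(u))-f(\alpha^2(z),\{xyu\})+g(\alpha(x),\alpha(y),[zu])-[\alpha^2(z)g(x,y,u)]-[g(x,y,z)\alpha^2(u)]$, $\delta_{II}^2 g(x,y,u,v,w)=\{\alpha^2(x)\alpha^2(y)g(u,v,w)\}-\{g(x,y,u)\alpha^2(v)\alpha^2(w)\}-\{\alpha^2(u)g(x,y,v)\alpha^2(w)\}-\{\alpha^2(u)\alpha^2(v)g(x,y,w)\}+g(\alpha^2(x),\alpha^2(y),\{uvw\})-g(\{xyu\},\alpha^2(v),\alpha^2(w))-g(\alpha^2(u),\{xyv\},\alpha^2(w))-g(\alpha^2(u),\alpha^2(v),\{xyw\})$,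 $d_I^2(f,g)(x,y,z)=\circlearrowleft_{x,y,z}([f(x,y)\alpha(z)]+f([xy],\alpha(z))+g(x,y,z))$, $d_{II}^2(f,g)(x,y,z,u)=\circlearrowleft_{x,y,z}(\{f(x,y)\alpha(z)\alpha(u)\}+g([xy],\alpha(z),\alpha(u)))$. Then $HomZ^2(L,L)\times HomZ^3(L,L)$ is the set of $(f,g)\in HomC^2\times HomC^3$ with $\delta_I^2(f,g)=0$, $\delta_{II}^2g=0$, $d_I^2(f,g)=0$, $d_{II}^2(f,g)=0$; $HomB^2(L,L)\times HomB^3(L,L)=\{(\delta_I^1h,\delta_{II}^1h): h\in HomC^1(L,L)\}$ (contained in the former); and the second cohomology group is the quotient $HomH^2(L,L)\times HomH^3(L,L)=(HomZ^2\times HomZ^3)/(HomB^2\times HomB^3)$. Deformations: $\mathbb{K}$-multilinear maps on $L$ are extended $\mathbb{K}[[t]]$-multilinearly to $L[[t]]$, and $\alpha$ is extended $\mathbb{K}[[t]]$-linearly. A one-parameter formal deformation of $(L,[\cdot,\cdot],\{\cdot,\cdot,\cdot\},\alpha)$ is a pair $f_t=\sum_{i\ge0}f_it^i$, $g_t=\sum_{i\ge0}g_it^i$ with $f_0=[\cdot,\cdot]$, $g_0=\{\cdot,\cdot,\cdot\}$, each $f_i:L\times L\to L$ $\mathbb{K}$-bilinear and each $g_i:L^3\to L$ $\mathbb{K}$-trilinear, such that $(L[[t]],f_t,g_t,\alpha)$ is an HLYA over $\mathbb{K}[[t]]$. Two deformations $(f_t,g_t)$, $(f_t',g_t')$ are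 equivalent if there is a $\mathbb{K}[[t]]$-linear isomorphism $\Phi_t=\sum_{i\ge0}\phi_it^i:L[[t]]\to L[[t]]$ (each $\phi_i:L\to L$ $\mathbb{K}$-linear) with $\phi_0=\mathrm{id}_L$, $\Phi_t\circ\alpha=\alpha\circ\Phi_t$, $\Phi_t(f_t(x,y))=f_t'(\Phi_t(x),\Phi_t(y))$ and $\Phi_t(g_t(x,y,z))=g_t'(\Phi_t(x),\Phi_t(y),\Phi_t(z))$. *)

(* Defs.v *)
From HB Require Import structures.
From mathcomp Require Import all_boot all_order all_algebra.
Set Implicit Arguments. Unset Strict Implicit. Unset Printing Implicit Defensive.
Import GRing.Theory.
Local Open Scope ring_scope.

Definition linK (K : fieldType) (L : lmodType K) (h : L -> L) : Prop :=
  forall (a : K) (x y : L), h (a *: x + y) = a *: h x + h y.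

Definition bilinK (K : fieldType) (L : lmodType K) (f : L -> L -> L) : Prop :=
  (forall z, linK (fun x => f x z)) /\ (forall x, linK (f x)).

Definition trilinK (K : fieldType) (L : lmodType K) (g : L -> L -> L -> L) : Prop :=
  [/\ (forall y z, linK (fun x => g x y z)),
      (forall x z, linK (fun y => g x y z)) &
      (forall x y, linK (g x y))].

(* ---------- The HLYA identities, over an arbitrary carrier M with an
   addition and a zero (used both for L and for L[[t]]) ---------- *)
Definition cyc3 (M : Type) (add : M -> M -> M) (F : M -> M -> M -> M) (x y z : M) : M :=
  add (add (F x y z) (F y z x)) (F z x y).

Definition HLYA_identities (M : Type) (add : M -> M -> M) (zero : M)
  (br : M -> M -> M) (tri : M -> M -> M -> M) (al : M -> M) : Prop :=
       (forall x y, al (br x y) = br (al x) (al y)) /\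
      (forall x y z, al (tri x y z) = tri (al x) (al y) (al z)) /\
      (forall x, br x x = zero) /\
      (forall x y, tri x x y = zero) /\
      (forall x y z,
         cyc3 add (fun a b c => add (br (br a b) (al c)) (tri a b c)) x y z = zero) /\
      (forall x y z u,
         cyc3 add (fun a b c => tri (br a b) (al c) (al u)) x y z = zero) /\
      (forall x y u v,
         tri (al x) (al y) (br u v)
         = add (br (tri x y u) (al (al v))) (br (al (al u)) (tri x y v))) /\
      (forall x y z u v,
         tri (al (al u)) (al (al v)) (tri x y z)
         = add (add (tri (tri u v x) (al (al y)) (al (al z)))
                    (tri (al (al x)) (tri u v y) (al (al z))))
               (tri (al (al x)) (al (al y)) (tri u v z))).

Definition is_HLYA (K : fieldType) (L : lmodType K)
  (br : L -> L -> L) (tri : L -> L -> L -> L) (al : L -> L) : Prop :=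
  [/\ bilinK br, trilinK tri, linK al & HLYA_identities +%R 0 br tri al].

Definition ser (K : fieldType) (L : lmodType K) := nat -> L.

Definition sadd (K : fieldType) (L : lmodType K) (x y : ser L) : ser L :=
  fun n => x n + y n.
Definition szero (K : fieldType) (L : lmodType K) : ser L := fun _ => 0.

Definition salpha (K : fieldType) (L : lmodType K) (al : L -> L) (x : ser L) : ser L :=
  fun n => al (x n).

(* Phi_t = sum_i phi_i t^i applied to x in L[[t]] *)
Definition ext1 (K : fieldType) (L : lmodType K) (phi : nat -> L -> L) (x : ser L) : ser L :=
  fun n => \sum_(i < n.+1) phi i (x (n - i)%N).

(* f_t = sum_i f_i t^i, extended K[[t]]-bilinearly to L[[t]] *)
Definition ext2 (K : fieldType) (L : lmodType K) (f : nat -> L -> L -> L)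
  (x y : ser L) : ser L :=
  fun n => \sum_(i < n.+1) \sum_(j < (n - i).+1) f i (x j) (y (n - i - j)%N).

(* g_t = sum_i g_i t^i, extended K[[t]]-trilinearly to L[[t]] *)
Definition ext3 (K : fieldType) (L : lmodType K) (g : nat -> L -> L -> L -> L)
  (x y z : ser L) : ser L :=
  fun n => \sum_(i < n.+1) \sum_(j < (n - i).+1) \sum_(k < (n - i - j).+1)
             g i (x j) (y k) (z (n - i - j - k)%N).

Definition is_deformation (K : fieldType) (L : lmodType K)
  (br : L -> L -> L) (tri : L -> L -> L -> L) (al : L -> L)
  (f : nat -> L -> L -> L) (g : nat -> L -> L -> L -> L) : Prop :=
  [/\ (forall x y, f 0%N x y = br x y),
      (forall x y z, g 0%N x y z = tri x y z),
      (forall i, bilinK (f i)),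
      (forall i, trilinK (g i)) &
      HLYA_identities (@sadd K L) (@szero K L) (ext2 f) (ext3 g) (salpha al)].

Definition equiv_deformations (K : fieldType) (L : lmodType K) (al : L -> L)
  (f : nat -> L -> L -> L) (g : nat -> L -> L -> L -> L)
  (f' : nat -> L -> L -> L) (g' : nat -> L -> L -> L -> L) : Prop :=
  exists phi : nat -> L -> L,
      (forall x, phi 0%N x = x) /\
        (forall i, linK (phi i)) /\
        bijective (ext1 phi) /\
        (forall x n, ext1 phi (salpha al x) n = salpha al (ext1 phi x) n) /\
        (forall x y n, ext1 phi (ext2 f x y) n = ext2 f' (ext1 phi x) (ext1 phi y) n) /\
        (forall x y z n, ext1 phi (ext3 g x y z) n
                         = ext3 g' (ext1 phi x) (ext1 phi y) (ext1 phi z) n).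

Definition HomC1 (K : fieldType) (L : lmodType K) (al : L -> L) (h : L -> L) : Prop :=
  linK h /\ (forall x, h (al x) = al (h x)).

Definition deltaI1 (K : fieldType) (L : lmodType K) (br : L -> L -> L) (h : L -> L)
  (x y : L) : L :=
  br x (h y) + br (h x) y - h (br x y).

Definition deltaII1 (K : fieldType) (L : lmodType K) (tri : L -> L -> L -> L) (h : L -> L)
  (x y z : L) : L :=
  tri (h x) y z + tri x (h y) z + tri x y (h z) - h (tri x y z).

Definition HomB23 (K : fieldType) (L : lmodType K)
  (br : L -> L -> L) (tri : L -> L -> L -> L) (al : L -> L)
  (F : L -> L -> L) (G : L -> L -> L -> L) : Prop :=
  exists h : L -> L,
    [/\ HomC1 al h,
        (forall x y, F x y = deltaI1 br h x y) &
        (forall x y z, G x y z = deltaII1 tri h x y z)].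

(* Main.v *)
Require Import Defs.
From mathcomp Require Import all_boot all_order all_algebra.
Import GRing.Theory.
Local Open Scope ring_scope.

Lemma linK0 (K : fieldType) (L : lmodType K) (h : L -> L) : linK h -> h 0 = 0.
Proof. move=> H; have := H (-1) 0 0; rewrite scaleN1r oppr0 addr0 => ->.
by rewrite scaleN1r addNr. Qed.

Lemma linKD (K : fieldType) (L : lmodType K) (h : L -> L) : linK h -> forall x y, h (x + y) = h x + h y.
Proof. by move=> H x y; have := H 1 x y; rewrite !scale1r. Qed.

Definition c0 (K : fieldType) (L : lmodType K) (a : L) : ser L := fun n => if n is 0%N then a else 0.
Arguments c0 {K L}.

Lemma zaux (V : zmodType) (x p Q s : V) : x + p = Q + s -> x - s = Q - p.
Proof. by move=> H; rewrite -(addrK p x) H addrAC addrK. Qed.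

Theorem mainTheorem4 (K : fieldType) (L : lmodType K)
  (br : L -> L -> L) (tri : L -> L -> L -> L) (al : L -> L)
  (f : nat -> L -> L -> L) (g : nat -> L -> L -> L -> L)
  (f' : nat -> L -> L -> L) (g' : nat -> L -> L -> L -> L) :
  is_HLYA br tri al ->
  is_deformation br tri al f g ->
  is_deformation br tri al f' g' ->
  equiv_deformations al f g f' g' ->
  HomB23 br tri al (fun x y => f 1%N x y - f' 1%N x y)
                   (fun x y z => g 1%N x y z - g' 1%N x y z).
Proof.
case=> _ _ alL _ [f0 g0 fL gL _] [f0' g0' fL' gL' _] [phi [p0 [pL [_ [pal [pf pg]]]]]].
have f00 : forall i a, f i a 0 = 0 by move=> i a; apply: linK0; case: (fL i) => _; apply.
have f00l : forall i a, f i 0 a = 0 by move=> i a; apply: (@linK0 _ _ (fun x => f i x a)); case: (fL i) => + _; apply.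
have f00r' : forall i a, f' i a 0 = 0 by move=> i a; apply: linK0; case: (fL' i) => _; apply.
have p00 : forall i, phi i 0 = 0 by move=> i; apply: linK0.
have al0 : al 0 = 0 by apply: linK0.
have alD := @linKD _ _ _ alL.
have g01 : forall i a b, g i 0 a b = 0 by move=> i a b; apply: (@linK0 _ _ (fun x => g i x a b)); case: (gL i) => + _ _; apply.
have g02 : forall i a b, g i a 0 b = 0 by move=> i a b; apply: (@linK0 _ _ (fun x => g i a x b)); case: (gL i) => _ + _; apply.
have g03 : forall i a b, g i a b 0 = 0 by move=> i a b; apply: linK0; case: (gL i) => _ _; apply.
have g01' : forall i a b, g' i 0 a b = 0 by move=> i a b; apply: (@linK0 _ _ (fun x => g' i x a b)); case: (gL' i) => + _ _; apply.
have g02' : forall i a b, g' i a 0 b = 0 by move=> i a b; apply: (@linK0 _ _ (fun x => g' i a x b)); case: (gL' i) => _ + _; apply.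
have g03' : forall i a b, g' i a b 0 = 0 by move=> i a b; apply: linK0; case: (gL' i) => _ _; apply.
have f00' : forall i a, f' i 0 a = 0 by move=> i a; apply: (@linK0 _ _ (fun x => f' i x a)); case: (fL' i) => + _; apply.
exists (phi 1%N); split.
- split; first exact: pL.
  move=> v; have := pal (c0 v) 1%N.
  rewrite /ext1 /salpha !big_ord_recr !big_ord0 /= /c0 /=.
  rewrite ?subn0 ?subnn ?add0r ?p0 ?p00 ?al0 ?f00 ?f00l ?f00' ?f00r' ?f0 ?f0' ?add0r ?addr0 ?alD; move=> H.
  exact: H.
- move=> a b; have := pf (c0 a) (c0 b) 1%N.
  rewrite /ext1 /ext2 !big_ord_recr !big_ord0 /= /c0 /=.
  rewrite ?subn0 ?subnn ?add0r ?p0 ?p00 ?al0 ?f00 ?f00l ?f00' ?f00r' ?f0 ?f0' ?add0r ?addr0 ?alD; move=> H.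
  exact: zaux H.
- move=> a b c; have := pg (c0 a) (c0 b) (c0 c) 1%N.
  rewrite /ext1 /ext3 !big_ord_recr !big_ord0 /= /c0 /=.
  rewrite ?subn0 ?subnn ?add0r ?p0 ?p00 ?g01 ?g02 ?g03 ?g01' ?g02' ?g03' ?g0 ?g0' ?add0r ?addr0; move=> H.
  rewrite /deltaII1; apply: zaux; rewrite H; congr (_ + _).
  by rewrite addrC [tri a b _ + _]addrC addrA.
Qed.
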